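(* Let $(\mathfrak g,V,\Theta)$ be a Lie–Leibniz triple, with $\mathbb U$, $R_\Theta$, $\sigma$ and $K$ as in the context. Then $K=\{k\in\mathbb U_2:\ [\chi,k]=0\text{ for all }\chi\in R_\Theta\}$; in particular $[R_\Theta,K]=0$.
   Context: Ground field $\mathbb{K}=\mathbb{R}$ or $\mathbb{C}$; all spaces $\mathbb{Z}$-graded with parity equal to degree mod 2. A Lie–Leibniz triple $(\mathfrak g,V,\Theta)$ consists of a Lie algebra $\mathfrak g$, a $\mathfrak g$-module $V$ (action $x\cdot u$) and a linear map $\Theta:V\to\mathfrak g$ with $\Theta(\Theta(u)\cdot v)=[\Theta(u),\Theta(v)]$ for all $u,v\in V$. Construction of $\mathbb U$: $\mathbb U_0=\mathfrak g$, $\mathbb U_1=V[-1]$ ($V$ in degree 1, odd), $\mathbb U_{-p+1}=\mathrm{Hom}(\mathbb U_1,\mathbb U_{-p+2})$ for $p\ge2$; brackets on $\mathbb U_{1-}$: Lie bracket on $\mathfrak g$, and recursively $[x,u]=x(u)$, $[u,x]=-(-1)^{|x|}x(u)$, $[x,y](u)=[x,y(u)]+(-1)^{|y|}[x(u),y]$ for $x,y\in\mathbb U_{0-}$, $u\in\mathbb U_1$, where $x(u)=x\cdot u$ for $x\in\mathfrak g$. This is a semilocal Lie superalgebra and $\mathbb U$ is its unique extension to a Lie superalgebra with $\mathbb U_+$ the free Lie superalgebra on $\mathbb U_1$. $\Theta$ is regarded as an element of $\mathbb U_{-1}=\mathrm{Hom}(\mathbb U_1,\mathfrak g)$. $R_\Theta\subseteq\mathbb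 U_{-1}$ is the $\mathfrak g$-submodule generated by $\Theta$ under the action $x\cdot\phi=[x,\phi]$, i.e. $(x\cdot\phi)(u)=[x,\phi(u)]-\phi(x\cdot u)$; it is the span of $\Theta$ and all $x_1\cdot(x_2\cdot\cdots(x_n\cdot\Theta))$. $\mathbb U_2$ is spanned by the brackets $[u,v]$, $u,v\in\mathbb U_1$ (symmetric in $u,v$). Let $\sigma:\mathbb U_2\to\mathbb U_1$ be the linear map with $\sigma([u,v])=\tfrac12(\Theta(u)\cdot v+\Theta(v)\cdot u)$. $K$ is the sum of all $\mathfrak g$-submodules of $\mathbb U_2$ (for the adjoint action of $\mathfrak g\subseteq\mathbb U$) contained in $\ker\sigma$. *)

(* Defs.v *)
From HB Require Import structures.
From mathcomp Require Import all_boot all_order all_algebra.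
From mathcomp Require Import Rstruct.
From mathcomp Require Import complex.
From Stdlib Require Reals.

Set Implicit Arguments.
Unset Strict Implicit.
Unset Printing Implicit Defensive.
Import Order.TTheory GRing.Theory Num.Theory.
Local Open Scope ring_scope.

Section LieLeibniz.
Variable F : fieldType.

Definition lie_bracket (g : lmodType F) (br : g -> g -> g) : Prop :=
  [/\ forall x, linear (br x),
      forall y, linear (fun x => br x y),
      forall x, br x x = 0
    & forall x y z, br x (br y z) + br y (br z x) + br z (br x y) = 0].

Definition lie_module (g V : lmodType F) (br : g -> g -> g)
    (act : g -> V -> V) : Prop :=
  [/\ forall x, linear (act x),
      forall v, linear (fun x => act x v)
    & forall x y v, act (br x y) v = act x (act y v) - act y (act x v)].

Definition lie_leibniz_triple (g V : lmodType F) (br : g -> g -> g)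
    (act : g -> V -> V) (Theta : V -> g) : Prop :=
  [/\ lie_bracket br, lie_module br act, linear Theta
    & forall u v, Theta (act (Theta u) v) = br (Theta u) (Theta v)].

(* (W, b) is the degree-2 part U_2 of the free Lie superalgebra on the odd
   space U_1 = V[-1], with b u v = [u, v]: i.e. W is the symmetric square
   of V, b the universal symmetric bilinear map (whose values span W). *)
Definition sym_square (V W : lmodType F) (b : V -> V -> W) : Prop :=
  [/\ forall u, linear (b u),
      forall u v, b u v = b v u,
      forall w : W, exists s : seq (V * V), w = \sum_(p <- s) b p.1 p.2
    & forall (X : lmodType F) (f : V -> V -> X),
        (forall u, linear (f u)) -> (forall u v, f u v = f v u) ->
        exists h : W -> X, linear h /\ forall u v, h (b u v) = f u v].

(* g-action on Hom(U_1, g) = U_{-1}:  (x . phi)(u) = [x, phi u] - phi (x . u). *)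
Definition hom_act (g V : lmodType F) (br : g -> g -> g) (act : g -> V -> V)
    (x : g) (phi : V -> g) : V -> g :=
  fun u => br x (phi u) - phi (act x u).

Inductive R_Theta (g V : lmodType F) (br : g -> g -> g) (act : g -> V -> V)
    (Theta : V -> g) : (V -> g) -> Prop :=
  | RT_base : R_Theta br act Theta Theta
  | RT_act x phi : R_Theta br act Theta phi ->
      R_Theta br act Theta (hom_act br act x phi)
  | RT_zero : R_Theta br act Theta (fun _ => 0)
  | RT_add phi psi : R_Theta br act Theta phi -> R_Theta br act Theta psi ->
      R_Theta br act Theta (fun u => phi u + psi u)
  | RT_scale (a : F) phi : R_Theta br act Theta phi ->
      R_Theta br act Theta (fun u => a *: phi u).

Definition g_submodule (g W : lmodType F) (ad2 : g -> W -> W)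
    (S : W -> Prop) : Prop :=
  [/\ S 0, forall w1 w2, S w1 -> S w2 -> S (w1 + w2),
      forall (a : F) w, S w -> S (a *: w)
    & forall x w, S w -> S (ad2 x w)].

(* K = sum of all g-submodules of U_2 contained in ker sigma:
   finite sums of elements each lying in such a submodule. *)
Definition in_K (g V W : lmodType F) (ad2 : g -> W -> W) (sigma : W -> V)
    (k : W) : Prop :=
  exists s : seq W, k = \sum_(w <- s) w /\
    forall w, w \in s -> exists S : W -> Prop,
      [/\ g_submodule ad2 S, forall y, S y -> sigma y = 0 & S w].

Definition prop47_over : Prop :=
  forall (g V W : lmodType F) (br : g -> g -> g) (act : g -> V -> V)
    (Theta : V -> g) (b : V -> V -> W)
    (ad2 : g -> W -> W) (brk : (V -> g) -> W -> V) (sigma : W -> V),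
  lie_leibniz_triple br act Theta ->
  sym_square b ->
  (* adjoint action of g on U_2: [x,[u,v]] = [x.u, v] + [u, x.v] *)
  (forall x, linear (ad2 x)) ->
  (forall x u v, ad2 x (b u v) = b (act x u) v + b u (act x v)) ->
  (* bracket U_{-1} x U_2 -> U_1: [chi,[u,v]] = chi(u).v + chi(v).u *)
  (forall chi : V -> g, linear chi ->
     linear (brk chi) /\
     forall u v, brk chi (b u v) = act (chi u) v + act (chi v) u) ->
  linear sigma ->
  (forall u v, sigma (b u v) = 2^-1 *: (act (Theta u) v + act (Theta v) u)) ->
  (forall k : W, in_K ad2 sigma k <->
     (forall chi, R_Theta br act Theta chi -> brk chi k = 0)) /\
  (forall chi k, R_Theta br act Theta chi -> in_K ad2 sigma k -> brk chi k = 0).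

End LieLeibniz.

(* Main.v *)
Require Import Defs.
From HB Require Import structures.
From mathcomp Require Import all_boot all_order all_algebra.
From mathcomp Require Import Rstruct.
From mathcomp Require Import complex.
From Stdlib Require Reals.

Set Implicit Arguments.
Unset Strict Implicit.
Unset Printing Implicit Defensive.
Import Order.TTheory GRing.Theory Num.Theory.
Local Open Scope ring_scope.

Lemma ab6 (M : zmodType) (A B C D E G : M) :
  A - B - C + (D - E - G) = A + D - (C + E + (B + G)).
Proof.
rewrite !opprD !addrA. rewrite -[A - B - C + D]addrA [- C + D]addrC !addrA.
rewrite -[A - B + D]addrA [-B + D]addrC !addrA.
by rewrite [A + D - B - C]addrAC [A + D - C - B - E]addrAC.
Qed.

Section Gen.
Variable F : fieldType.

Section Lin.
Variables (U X : lmodType F) (f : U -> X).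
Hypothesis Hf : linear f.
Lemma linD u v : f (u + v) = f u + f v.
Proof. by have := Hf 1 u v; rewrite !scale1r. Qed.
Lemma lin0 : f 0 = 0.
Proof. have H := linD 0 0; rewrite addr0 in H; apply: (addrI (f 0)); by rewrite -H addr0. Qed.
Lemma linZ a u : f (a *: u) = a *: f u.
Proof. by have := Hf a u 0; rewrite !addr0 lin0 addr0. Qed.
Lemma linN u : f (- u) = - f u.
Proof. by rewrite -scaleN1r linZ scaleN1r. Qed.
Lemma linB u v : f (u - v) = f u - f v.
Proof. by rewrite linD linN. Qed.
End Lin.

Lemma ext_gen (V W X : lmodType F) (b : V -> V -> W)
  (bspan : forall w : W, exists s : seq (V * V), w = \sum_(p <- s) b p.1 p.2)
  (h1 h2 : W -> X) :
  (forall w1 w2, h1 (w1 + w2) = h1 w1 + h1 w2) -> h1 0 = 0 ->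
  (forall w1 w2, h2 (w1 + w2) = h2 w1 + h2 w2) -> h2 0 = 0 ->
  (forall u v, h1 (b u v) = h2 (b u v)) -> forall w, h1 w = h2 w.
Proof.
move=> A1 Z1 A2 Z2 E w; have [s ->] := bspan w.
elim: s => [|p s IH]; first by rewrite big_nil Z1 Z2.
by rewrite big_cons A1 A2 IH E.
Qed.

Lemma main47 : (2 : F) != 0 -> prop47_over F.
Proof.
move=> two0 g V W br act Theta b ad2 brk sigma
  [[brL brR _ _] [actL actR actM] ThL ThH] [bL bC bspan _] ad2L ad2b brkH sigL sigb.
have actD1 : forall x y v, act (x + y) v = act x v + act y v.
  by move=> x y v; exact: (linD (actR v)).
have actB1 : forall x y v, act (x - y) v = act x v - act y v.
  by move=> x y v; exact: (linB (actR v)).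
have actZ1 : forall a x v, act (a *: x) v = a *: act x v.
  by move=> a x v; exact: (linZ (actR v)).
have act01 : forall v, act 0 v = 0.
  by move=> v; exact: (lin0 (actR v)).
have homL : forall x phi, linear phi -> linear (hom_act br act x phi).
  move=> x phi Hphi a u v; rewrite /hom_act.
  by rewrite (actL x) Hphi (brL x) Hphi scalerBr opprD addrACA.
have RLin : forall chi, R_Theta br act Theta chi -> linear chi.
  move=> chi Rc; elim: Rc => //.
  - by move=> x phi _ H; exact: homL.
  - by move=> a u v; rewrite scaler0 addr0.
  - move=> phi psi _ Hphi _ Hpsi a u v.
    by rewrite Hphi Hpsi scalerDr addrACA.
  - move=> c phi _ Hphi a u v.
    by rewrite Hphi scalerDr !scalerA mulrC.
have brkD : forall chi, linear chi -> forall w1 w2, brk chi (w1 + w2) = brk chi w1 + brk chi w2.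
  by move=> chi Hc; exact: (linD (brkH chi Hc).1).
have brk0 : forall chi, linear chi -> brk chi 0 = 0.
  by move=> chi Hc; exact: (lin0 (brkH chi Hc).1).
have brkZ : forall chi, linear chi -> forall a w, brk chi (a *: w) = a *: brk chi w.
  by move=> chi Hc; exact: (linZ (brkH chi Hc).1).
have key : forall phi, linear phi -> forall x w,
    brk (hom_act br act x phi) w = act x (brk phi w) - brk phi (ad2 x w).
  move=> phi Hphi x; apply: (ext_gen bspan).
  - exact: brkD (homL _ _ Hphi).
  - exact: brk0 (homL _ _ Hphi).
  - move=> w1 w2; rewrite brkD // (linD (actL x)) (linD (ad2L x)) brkD //.
    by rewrite opprD addrACA.
  - by rewrite brk0 // (lin0 (actL x)) (lin0 (ad2L x)) brk0 // subr0.
  - move=> u v; rewrite (brkH _ (homL _ _ Hphi)).2 /hom_act ad2b.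
    rewrite (linD (brkH _ Hphi).1) !(brkH _ Hphi).2 (linD (actL x)).
    rewrite !actB1 !actM; exact: ab6.
have ThLin : linear Theta by [].
have sigTh : forall w, brk Theta w = 2 *: sigma w.
  apply: (ext_gen bspan).
  - exact: brkD.
  - exact: brk0.
  - by move=> w1 w2; rewrite (linD sigL) scalerDr.
  - by rewrite (lin0 sigL) scaler0.
  - by move=> u v; rewrite sigb (brkH _ ThL).2 scalerA mulfV // scale1r.
have brkzero : forall w, brk (fun _ => 0) w = 0.
  have L0 : linear (fun _ : V => (0 : g)) by move=> a u v; rewrite scaler0 addr0.
  apply: (ext_gen bspan (h2 := fun _ => 0)) => //.
  - exact: brkD.
  - exact: brk0.
  - by rewrite addr0.
  - by move=> u v; rewrite (brkH _ L0).2 !act01 addr0.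
have brkadd : forall phi psi, linear phi -> linear psi -> forall w,
    brk (fun u => phi u + psi u) w = brk phi w + brk psi w.
  move=> phi psi Hphi Hpsi.
  have L : linear (fun u => phi u + psi u).
    by move=> a u v; rewrite Hphi Hpsi scalerDr addrACA.
  apply: (ext_gen bspan (h2 := fun w => brk phi w + brk psi w)).
  - exact: brkD.
  - exact: brk0.
  - by move=> w1 w2; rewrite !brkD // addrACA.
  - by rewrite !brk0 // addr0.
  - by move=> u v; rewrite (brkH _ L).2 (brkH _ Hphi).2 (brkH _ Hpsi).2 !actD1 addrACA.
have brkscale : forall c phi, linear phi -> forall w,
    brk (fun u => c *: phi u) w = c *: brk phi w.
  move=> c phi Hphi.
  have L : linear (fun u => c *: phi u).
    by move=> a u v; rewrite Hphi scalerDr !scalerA mulrC.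
  apply: (ext_gen bspan (h2 := fun w => c *: brk phi w)).
  - exact: brkD.
  - exact: brk0.
  - by move=> w1 w2; rewrite brkD // scalerDr.
  - by rewrite brk0 // scaler0.
  - by move=> u v; rewrite (brkH _ L).2 (brkH _ Hphi).2 !actZ1 scalerDr.
have fwd : forall S : W -> Prop, g_submodule ad2 S -> (forall y, S y -> sigma y = 0) ->
    forall chi, R_Theta br act Theta chi -> forall w, S w -> brk chi w = 0.
  move=> S [S0 SD SZ Sad] Ssig chi Rchi; elim: Rchi.
  - by move=> w Sw; rewrite sigTh Ssig // scaler0.
  - move=> x phi Rphi IH w Sw; rewrite key; last exact: RLin.
    by rewrite IH // (lin0 (actL x)) IH ?subr0 //; apply: Sad.
  - by move=> w _; rewrite brkzero.
  - move=> phi psi Rphi IH1 Rpsi IH2 w Sw.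
    by rewrite brkadd ?IH1 ?IH2 ?addr0 //; apply: RLin.
  - move=> c phi Rphi IH w Sw.
    by rewrite brkscale ?IH ?scaler0 //; apply: RLin.
have fwdK : forall chi k, R_Theta br act Theta chi -> in_K ad2 sigma k -> brk chi k = 0.
  move=> chi k Rchi [s [-> Hs]].
  elim: s Hs => [|w s IH] Hs; first by rewrite big_nil brk0 //; apply: RLin.
  rewrite big_cons brkD; last exact: RLin.
  have [S [HS Hsig Sw]] := Hs w (mem_head _ _).
  rewrite (fwd S HS Hsig chi Rchi w Sw) add0r; apply: IH.
  by move=> w' Hw'; apply: Hs; rewrite in_cons Hw' orbT.
split; last exact: fwdK.
move=> k; split; first by move=> Hk chi Rchi; exact: fwdK.
move=> Hk; exists [:: k]; split; first by rewrite big_seq1.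
move=> w; rewrite mem_seq1 => /eqP ->.
exists (fun y => forall chi, R_Theta br act Theta chi -> brk chi y = 0); split => //.
- split.
  + by move=> chi Rchi; rewrite brk0 //; apply: RLin.
  + by move=> w1 w2 H1 H2 chi Rchi; rewrite brkD ?H1 ?H2 ?addr0 //; apply: RLin.
  + by move=> a w1 H1 chi Rchi; rewrite brkZ ?H1 ?scaler0 //; apply: RLin.
  + move=> x w1 H1 chi Rchi.
    have Hc := RLin _ Rchi.
    have E := key chi Hc x w1.
    rewrite (H1 chi Rchi) (H1 _ (RT_act x Rchi)) (lin0 (actL x)) sub0r in E.
    by apply/eqP; rewrite -oppr_eq0 -E.
- move=> y Hy; have := sigTh y; rewrite (Hy _ (RT_base br act Theta)) => /esym/eqP.
  by rewrite scaler_eq0 (negbTE two0) /= => /eqP.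
Qed.

End Gen.

Theorem proposition4p7 :
  prop47_over Reals.Rdefinitions.R /\ prop47_over (complex Reals.Rdefinitions.R).
Proof.
by split; apply: main47; rewrite pnatr_eq0.
Qed.
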